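(* The automorphism group $\Gamma(C)$ of the cyclic order relation $C$ on $\mathbb Q\times\mathbb Z$ consists exactly of the positive permutations belonging to $\Gamma(S)$, i.e. of all positive permutations of $\mathbb Q\times\mathbb Z$ that initiate a permutation of $\mathbb Q$ of rotation type.
   Context: $\mathbb Q\times\mathbb Z$ denotes the set $\mathbb Q\times\mathbb Z$ with the lexicographic order: $(r,z)<(r',z')$ iff $r<r'$, or $r=r'$ and $z<z'$. On $\mathbb Q\times\mathbb Z$: $C(a,b,c)\iff(a<b<c)\vee(b<c<a)\vee(c<a<b)$, $B(a,b,c)\iff(a<b<c)\vee(a>b>c)$, $S(a,b,c,d)\iff(B(a,b,c)\vee B(a,d,c))\wedge(B(b,a,d)\vee B(b,c,d))$; $\Gamma(R)$ is the group of permutations of $\mathbb Q\times\mathbb Z$ preserving $R$. A vertical is a set $\{r\}\times\mathbb Z$. A permutation $g$ is systemic if it maps every vertical onto a vertical; it initiates the permutation $h$ of $\mathbb Q$ with $g(\{a\}\times\mathbb Z)=\{h(a)\}\times\mathbb Z$. A systemic permutation is positive if it preserves the order on each vertical. A section of $\mathbb Q$ is a pair $\{I_1,I_2\}$ with $I_1\cup I_2=\mathbb Q$, $I_1\cap I_2=\emptyset$, and $a<b$ for all $a\in I_1,b\in I_2$ (one of them may be empty). A permutation $h$ of $\mathbb Q$ is of rotation type if for some section $\{I_1,I_2\}$, $h$ is increasing on $I_1$ and on $I_2$ and $h(a)>h(b)$ for all $a\in I_1$, $b\in I_2$. *)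

(* Defs.v *)
From mathcomp Require Import all_boot all_order all_algebra.
Set Implicit Arguments. Unset Strict Implicit. Unset Printing Implicit Defensive.
Import Order.TTheory GRing.Theory Num.Theory.
Local Open Scope ring_scope.

Definition QZ := (rat * int)%type.

Definition ltQZ (x y : QZ) : Prop :=
  (x.1 < y.1) \/ (x.1 = y.1 /\ x.2 < y.2).

Definition Crel (a b c : QZ) : Prop :=
  (ltQZ a b /\ ltQZ b c) \/ (ltQZ b c /\ ltQZ c a) \/ (ltQZ c a /\ ltQZ a b).

Definition Brel (a b c : QZ) : Prop :=
  (ltQZ a b /\ ltQZ b c) \/ (ltQZ b a /\ ltQZ c b).

Definition Srel (a b c d : QZ) : Prop :=
  (Brel a b c \/ Brel a d c) /\ (Brel b a d \/ Brel b c d).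

Definition preserves3 (R : QZ -> QZ -> QZ -> Prop) (g : QZ -> QZ) : Prop :=
  forall a b c, R a b c <-> R (g a) (g b) (g c).

Definition preserves4 (R : QZ -> QZ -> QZ -> QZ -> Prop) (g : QZ -> QZ) : Prop :=
  forall a b c d, R a b c d <-> R (g a) (g b) (g c) (g d).

Definition maps_vertical_onto (g : QZ -> QZ) (a r : rat) : Prop :=
  (forall z : int, (g (a, z)).1 = r) /\
  (forall p : QZ, p.1 = r -> exists z : int, g (a, z) = p).

Definition systemic (g : QZ -> QZ) : Prop :=
  forall a : rat, exists r : rat, maps_vertical_onto g a r.

Definition initiates (g : QZ -> QZ) (h : rat -> rat) : Prop :=
  forall a : rat, maps_vertical_onto g a (h a).

Definition positive_perm (g : QZ -> QZ) : Prop :=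
  systemic g /\
  forall (a : rat) (z z' : int), z < z' -> (g (a, z)).2 < (g (a, z')).2.

(* section {I1, I2} of Q, with I2 the complement of I1 *)
Definition is_section (I1 : rat -> Prop) : Prop :=
  forall a b : rat, I1 a -> ~ I1 b -> a < b.

Definition rotation_type (h : rat -> rat) : Prop :=
  exists I1 : rat -> Prop,
    is_section I1 /\
    (forall a b, I1 a -> I1 b -> a < b -> h a < h b) /\
    (forall a b, ~ I1 a -> ~ I1 b -> a < b -> h a < h b) /\
    (forall a b, I1 a -> ~ I1 b -> h b < h a).

(* Main.v *)
Require Import Defs.
From mathcomp Require Import all_boot all_order all_algebra.
From mathcomp Require Import zify.
From Stdlib Require Import Classical FunctionalExtensionality PropExtensionality.
Import Order.TTheory GRing.Theory Num.Theory.
Local Open Scope ring_scope.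

Definition Cg {T} (lt : T -> T -> Prop) (a b c : T) : Prop :=
  (lt a b /\ lt b c) \/ (lt b c /\ lt c a) \/ (lt c a /\ lt a b).
Definition Bg {T} (lt : T -> T -> Prop) (a b c : T) : Prop :=
  (lt a b /\ lt b c) \/ (lt b a /\ lt c b).
Definition Sg {T} (lt : T -> T -> Prop) (a b c d : T) : Prop :=
  (Bg lt a b c \/ Bg lt a d c) /\ (Bg lt b a d \/ Bg lt b c d).

Definition sto {T} (lt : T -> T -> Prop) : Prop :=
  (forall x, ~ lt x x) /\ (forall x y z, lt x y -> lt y z -> lt x z) /\
  (forall x y, x = y \/ lt x y \/ lt y x).

Definition covers {T} (lt : T -> T -> Prop) (x s : T) : Prop :=
  lt x s /\ forall w, lt x w -> lt w s -> False.

Ltac sat lt irr tr :=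
  repeat match goal with
  | H1 : lt ?a ?b, H2 : lt ?b ?c |- _ =>
      lazymatch goal with
      | _ : lt a c |- _ => fail
      | _ => pose proof (tr _ _ _ H1 H2)
      end
  end;
  repeat match goal with
  | H1 : lt ?a ?b |- _ =>
      lazymatch goal with
      | _ : ~ lt b a |- _ => fail
      | _ => assert (~ lt b a) by (let H := fresh in intro H; exact (irr _ (tr _ _ _ H1 H)))
      end
  end;
  try match goal with H : lt ?a ?a |- _ => exfalso; exact (irr _ H) end;
  repeat match goal with
  | H1 : lt ?a ?b |- _ =>
      lazymatch goal with
      | _ : a <> b |- _ => fail
      | _ => assert (a <> b) by (let H := fresh in intro H; rewrite H in H1; exact (irr _ H1));
             assert (b <> a) by (let H := fresh in intro H; rewrite H in H1; exact (irr _ H1))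
      end
  end.

Ltac dec_hyps :=
  repeat match goal with
  | H : _ /\ _ |- _ => destruct H
  | H : _ \/ _ |- _ => destruct H
  end.

Ltac solve_ord lt irr tr :=
  unfold Cg, Sg, Bg in *; dec_hyps; sat lt irr tr;
  repeat match goal with
  | x : _ |- _ => lazymatch goal with _ : ~ lt x x |- _ => fail | _ => assert (~ lt x x) by apply irr; assert (x = x) by reflexivity end
  end; tauto.

Section G.
Context {T : Type} (lt : T -> T -> Prop) (Hs : sto lt).
Let irr := proj1 Hs.
Let tr := proj1 (proj2 Hs).
Let tot := proj2 (proj2 Hs).

Ltac split_all := repeat match goal with x : T, y : T |- _ => lazymatch goal with | _ : lt x y |- _ => fail | _ : lt y x |- _ => fail | _ => destruct (tot x y) as [<-|[?|?]] end end.

Lemma C_asym a b c : Cg lt a b c -> Cg lt a c b -> False.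
Proof. intros. solve_ord lt irr tr. Qed.

Lemma C_dist a b c : Cg lt a b c -> a <> b /\ b <> c /\ a <> c.
Proof. intros; unfold Cg in *; dec_hyps; repeat split; intro E; subst; sat lt irr tr. Qed.

Lemma CS a b c d : Sg lt a b c d <-> (Cg lt a b c /\ Cg lt c d a) \/ (Cg lt a d c /\ Cg lt c b a).
Proof.
split_all; solve_ord lt irr tr.
Qed.
End G.


Section G2.
Context {T : Type} (lt : T -> T -> Prop) (Hs : sto lt).
Let irr := proj1 Hs.
Let tr := proj1 (proj2 Hs).
Let tot := proj2 (proj2 Hs).
Ltac split_all := repeat match goal with x : T, y : T |- _ => lazymatch goal with | _ : lt x y |- _ => fail | _ : lt y x |- _ => fail | _ => destruct (tot x y) as [<-|[?|?]] end end.

Lemma Cxs x s y : covers lt x s -> (Cg lt x s y <-> y <> x /\ y <> s).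
Proof.
move=> [Hxs Hc]; have := Hc y; split_all; solve_ord lt irr tr.
Qed.

Lemma SC x s y z : covers lt x s -> y <> s -> z <> s ->
  (Cg lt x y z <-> Sg lt s x z y).
Proof.
move=> [Hxs Hc]; have := Hc y; have := Hc z; split_all; solve_ord lt irr tr.
Qed.

Definition ltRot (P : T -> Prop) x y := (~ P x /\ P y) \/ ((P x <-> P y) /\ lt x y).

Lemma rotC (P : T -> Prop) (down : forall x y, lt x y -> P y -> P x) a b c :
  Cg lt a b c <-> Cg (ltRot P) a b c.
Proof.
unfold ltRot.
have Ha := down. split_all;
repeat match goal with x : T |- _ => lazymatch goal with _ : P x |- _ => fail | _ : ~ P x |- _ => fail | _ => destruct (classic (P x)) end end;
  try (match goal with H : lt ?x ?y, HP : P ?y, HN : ~ P ?x |- _ => exfalso; exact (HN (down _ _ H HP)) end);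
  solve_ord lt irr tr.
Qed.
End G2.


Lemma isoC {T} (lt1 lt2 : T -> T -> Prop) (f : T -> T) :
  (forall x y, lt1 x y -> lt2 (f x) (f y)) -> injective f ->
  (forall x y, x = y \/ lt1 x y \/ lt1 y x) ->
  (forall x y, lt2 x y -> lt2 y x -> False) -> (forall x, ~ lt2 x x) ->
  forall a b c, Cg lt1 a b c <-> Cg lt2 (f a) (f b) (f c).
Proof.
move=> mono inj tot asym irr.
have E : lt1 = fun x y => lt2 (f x) (f y).
  apply: functional_extensionality => x; apply: functional_extensionality => y.
  apply: propositional_extensionality; split; first exact: mono.
  move=> H; case: (tot x y) => [E|[//|H']].
  - by subst; case: (irr _ H).
  - by case: (asym _ _ H (mono _ _ H')).
by move=> a b c; rewrite E.
Qed.

Section R.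
Context {T : Type} (lt : T -> T -> Prop) (Hs : sto lt).
Let irr := proj1 Hs.
Let tr := proj1 (proj2 Hs).
Let tot := proj2 (proj2 Hs).
Context (f : T -> T) (finj : injective f)
  (fC : forall a b c, Cg lt a b c -> Cg lt (f a) (f b) (f c)).

Definition I1 a := exists b, lt a b /\ lt (f b) (f a).

Lemma I1_down a b : I1 a -> lt b a -> I1 b.
Proof.
move=> [w [Haw Hw]] Hba; exists w; split; first exact: tr Hba Haw.
have : Cg lt b a w by left.
move/fC => H; solve_ord lt irr tr.
Qed.

Lemma I1_sec a b : I1 a -> ~ I1 b -> lt a b.
Proof.
move=> Ha Hb; case: (tot a b) => [E|[//|H]].
- by subst.
- by case: Hb; exact: I1_down _ _ Ha H.
Qed.

Lemma I1_inc a b : I1 a -> I1 b -> lt a b -> lt (f a) (f b).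
Proof.
move=> _ [w [Hbw Hw]] Hab.
have : Cg lt a b w by left.
move/fC => H; solve_ord lt irr tr.
Qed.

Lemma nI1_inc a b : ~ I1 a -> ~ I1 b -> lt a b -> lt (f a) (f b).
Proof.
move=> Ha _ Hab; case: (tot (f a) (f b)) => [E|[//|H]].
- by move/finj: E => E; subst; case: (irr _ Hab).
- by case: Ha; exists b.
Qed.

Lemma I1_cross a b : I1 a -> ~ I1 b -> lt (f b) (f a).
Proof.
move=> Ha Hb; have Hab := I1_sec _ _ Ha Hb.
case: Ha => [w [Haw Hw]].
case: (tot w b) => [E|[H|H]].
- by subst.
- have : Cg lt a w b by left.
  move/fC => H'; solve_ord lt irr tr.
- have : Cg lt a b w by left.
  move/fC => H'.
  have Hn : ~ lt (f w) (f b) by move=> Hl; apply: Hb; exists w.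
  solve_ord lt irr tr.
Qed.
End R.


Lemma ltQZ_sto : sto ltQZ.
Proof.
split; [|split].
- by move=> [a z] [/=|[_ /=]]; rewrite ltxx.
- move=> [a i] [b j] [c k]; rewrite /ltQZ /= => [[H1|[E1 H1]] [H2|[E2 H2]]]; subst.
  + by left; exact: lt_trans H1 H2.
  + by left.
  + by left.
  + by right; split; [|exact: lt_trans H1 H2].
- move=> [a i] [b j]; rewrite /ltQZ /=; case: (ltgtP a b) => H.
  + by right; left; left.
  + by right; right; left.
  + subst; case: (ltgtP i j) => H.
    * by right; left; right.
    * by right; right; right.
    * by subst; left.
Qed.

Definition succ (x : QZ) : QZ := (x.1, x.2 + 1).

Lemma covers_succ x : covers ltQZ x (succ x).
Proof.
case: x => [a i]; rewrite /covers /succ /ltQZ /=; split.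
  by right; split => //; lia.
move=> [b j] /= [H1|[E1 H1]] [H2|[E2 H2]]; subst.
- by have := lt_trans H1 H2; rewrite ltxx.
- by rewrite ltxx in H1.
- by rewrite ltxx in H2.
- lia.
Qed.

Lemma succ_neq x : succ x <> x.
Proof. case: x => a i; rewrite /succ /= => [[E]]; lia. Qed.

Lemma succ_inj x y : succ x = succ y -> x = y.
Proof. case: x => a i; case: y => b j; rewrite /succ /= => [[-> E]]; congr (_, _); lia. Qed.

Lemma succ_comm_C (g : QZ -> QZ) : bijective g -> preserves3 Crel g ->
  forall x, g (succ x) = succ (g x).
Proof.
move=> [gi gK gKi] HC x.
case: (classic (g (succ x) = succ (g x))) => [//|Hne]; exfalso.
set y' := gi (succ (g x)).
have Hy1 : y' <> x.
  move=> E; have : g y' = succ (g x) by rewrite /y' gKi.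
  by rewrite E => H; apply: (succ_neq (g x)); rewrite -H.
have Hy2 : y' <> succ x.
  move=> E; have : g y' = succ (g x) by rewrite /y' gKi.
  by rewrite E.
have H1 : Crel x (succ x) y' := (proj2 (@Cxs _ ltQZ ltQZ_sto _ _ _ (covers_succ x))) (conj Hy1 Hy2).
have := (proj1 (HC _ _ _)) H1; rewrite /y' gKi => H2.
have H3 : Cg ltQZ (g x) (succ (g x)) (g (succ x)).
  apply: (proj2 (@Cxs _ ltQZ ltQZ_sto _ _ _ (covers_succ (g x)))); split => //.
  move/(can_inj gK) => E; exact: (succ_neq x E).
exact: (@C_asym _ ltQZ ltQZ_sto _ _ _ H2 H3).
Qed.

Lemma pos_succ (g : QZ -> QZ) : positive_perm g -> forall x, g (succ x) = succ (g x).
Proof.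
move=> [sys inc] [a z]; case: (sys a) => r [Hr Honto].
set f := fun z => (g (a, z)).2.
have Hlt : f z < f (z + 1) by apply: inc; lia.
case: (Honto (r, f z + 1) erefl) => w Hw.
have Hfw : f w = f z + 1 by rewrite /f Hw.
have Hf : f (z + 1) = f z + 1.
  case: (ltgtP w z) => Hwz.
  - have := inc a w z Hwz; rewrite -/(f w) -/(f z); lia.
  - case: (ltgtP w (z + 1)) => Hw1.
    + lia.
    + have := inc a (z + 1) w Hw1; rewrite -/(f w) -/(f (z+1)); lia.
    + by rewrite -Hw1.
  - subst; lia.
rewrite /succ /= [LHS]surjective_pairing; congr (_, _); first by rewrite !Hr.
exact: Hf.
Qed.

Lemma formula (g : QZ -> QZ) : (forall x, g (succ x) = succ (g x)) ->
  forall a k, g (a, k) = ((g (a, 0)).1, (g (a, 0)).2 + k).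
Proof.
move=> Hs a.
have Hp : forall n : nat, g (a, n%:Z) = ((g (a, 0)).1, (g (a, 0)).2 + n%:Z).
  elim=> [|n IH]; first by rewrite addr0 -surjective_pairing.
  have -> : (a, (n.+1)%:Z) = succ (a, n%:Z) by rewrite /succ /=; congr (_, _); lia.
  by rewrite Hs IH /succ /=; congr (_, _); lia.
have Hn : forall n : nat, g (a, - n%:Z) = ((g (a, 0)).1, (g (a, 0)).2 - n%:Z).
  elim=> [|n IH]; first by rewrite oppr0 subr0 -surjective_pairing.
  have E : succ (a, - (n.+1)%:Z) = (a, - n%:Z) by rewrite /succ /=; congr (_, _); lia.
  have := Hs (a, - (n.+1)%:Z); rewrite E IH /succ => E2.
  rewrite [LHS]surjective_pairing; congr (_, _).
  + by have := congr1 fst E2.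
  + have := congr1 snd E2 => /= E3; lia.
move=> [n|n]; first exact: Hp.
by rewrite NegzE Hn.
Qed.


Definition ltR (a b : rat) : Prop := a < b.

Lemma ltR_sto : sto ltR.
Proof.
rewrite /ltR; split; [|split].
- by move=> x; rewrite ltxx.
- by move=> x y z; exact: lt_trans.
- by move=> x y; case: (ltgtP x y) => H; [right; left|right; right|left].
Qed.

Lemma struct (g : QZ -> QZ) : bijective g -> (forall x, g (succ x) = succ (g x)) ->
  positive_perm g /\ bijective (fun a => (g (a, 0)).1) /\
  initiates g (fun a => (g (a, 0)).1).
Proof.
move=> gb Hs; have F := formula g Hs.
have Hini : initiates g (fun a => (g (a, 0)).1).
  move=> a; split; first by move=> z; rewrite F.
  move=> [p1 p2] /= Hp; exists (p2 - (g (a, 0)).2); by rewrite F Hp addrC subrK.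
split; [split|split] => //.
- by move=> a; exists (g (a, 0)).1; exact: Hini.
- by move=> a z z' H; rewrite (F a z) (F a z') /= ltrD2l.
case: gb => gi gK gKi; exists (fun r => (gi (r, 0)).1).
- move=> a /=.
  have E : g (a, - (g (a, 0)).2) = ((g (a, 0)).1, 0) by rewrite F subrr.
  by rewrite -E gK.
- move=> r /=; have := gKi (r, 0); case: (gi (r, 0)) => b k; rewrite F => [[E _]].
  exact: E.
Qed.

Lemma Cg_mono {T U} (lt1 : T -> T -> Prop) (lt2 : U -> U -> Prop) (f : T -> U) a b c :
  (forall x y, lt1 x y -> lt2 (f x) (f y)) -> Cg lt1 a b c -> Cg lt2 (f a) (f b) (f c).
Proof.
move=> m; rewrite /Cg => [[[X Y]|[[X Y]|[X Y]]]].
- by left; split; apply: m.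
- by right; left; split; apply: m.
- by right; right; split; apply: m.
Qed.

Lemma ltQZ_fst p q : ltQZ p q -> p.1 <> q.1 -> ltR p.1 q.1.
Proof. by case=> [//|[E _]]. Qed.

Lemma key1 (g : QZ -> QZ) : bijective g -> preserves3 Crel g ->
  positive_perm g /\
  exists h : rat -> rat, bijective h /\ initiates g h /\ rotation_type h.
Proof.
move=> gb HC; have Hs := succ_comm_C g gb HC.
have [Hpos [hb Hini]] := struct g gb Hs.
split => //; set h := fun a => (g (a, 0)).1 in hb Hini *.
exists h; split => //; split => //.
have hinj : injective h by case: hb => hi hK _; exact: can_inj hK.
have hC : forall a b c, Cg ltR a b c -> Cg ltR (h a) (h b) (h c).
  move=> a b c H.
  have [Hab [Hbc Hac]] := C_dist ltR ltR_sto _ _ _ H.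
  have H1 : Crel (a, 0) (b, 0) (c, 0).
    apply: (@Cg_mono _ _ ltR ltQZ (fun x => (x, 0%R)) a b c _ H) => x y Hxy; by left.
  have := proj1 (HC _ _ _) H1; rewrite /Cg => H2.
  have d1 : h a <> h b by move/hinj; exact: Hab.
  have d2 : h b <> h c by move/hinj; exact: Hbc.
  have d3 : h a <> h c by move/hinj; exact: Hac.
  have d4 : h b <> h a by move/hinj => E; apply: Hab; rewrite E.
  have d5 : h c <> h b by move/hinj => E; apply: Hbc; rewrite E.
  have d6 : h c <> h a by move/hinj => E; apply: Hac; rewrite E.
  rewrite /Cg; case: H2 => [[X Y]|[[X Y]|[X Y]]].
  + by left; split; apply: ltQZ_fst.
  + by right; left; split; apply: ltQZ_fst.
  + by right; right; split; apply: ltQZ_fst.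
exists (I1 ltR h); split; [|split; [|split]].
- move=> a b Ha Hb; exact: (@I1_sec _ ltR ltR_sto h hC a b Ha Hb).
- move=> a b Ha Hb Hab; exact: (@I1_inc _ ltR ltR_sto h hC a b Ha Hb Hab).
- move=> a b Ha Hb Hab; exact: (@nI1_inc _ ltR ltR_sto h hinj a b Ha Hb Hab).
- move=> a b Ha Hb; exact: (@I1_cross _ ltR ltR_sto h hC a b Ha Hb).
Qed.


Lemma key2 (g : QZ -> QZ) : bijective g -> positive_perm g ->
  (exists h : rat -> rat, bijective h /\ initiates g h /\ rotation_type h) ->
  preserves3 Crel g.
Proof.
move=> gb [_ inc] [h [_ [Hini [I [sec [inc1 [inc2 cross]]]]]]].
have ginj : injective g by case: gb => gi gK _; exact: can_inj gK.
have Hh : forall a z, (g (a, z)).1 = h a by move=> a z; exact: (proj1 (Hini a) z).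
set P := fun x : QZ => I x.1.
have down : forall x y, ltQZ x y -> P y -> P x.
  move=> [a i] [b j]; rewrite /P /ltQZ /= => [[H|[E H]]] Hb; last by rewrite E.
  case: (classic (I a)) => // Ha.
  by have := sec b a Hb Ha; rewrite ltNge le_eqVlt H orbT.
have mono : forall x y, ltRot ltQZ P x y -> ltQZ (g x) (g y).
  move=> [a i] [b j]; rewrite /ltRot /P /ltQZ /= => [[[Ha Hb]|[E [H|[E2 H]]]]].
  - by left; rewrite !Hh; exact: cross.
  - left; rewrite !Hh; case: (classic (I a)) => Ha.
    + by apply: inc1 => //; apply/E.
    + by apply: inc2 => // Hb; apply: Ha; apply/E.
  - by subst; right; rewrite !Hh; split => //; exact: inc.
have tot : forall x y, x = y \/ ltRot ltQZ P x y \/ ltRot ltQZ P y x.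
  move=> x y; case: (proj2 (proj2 ltQZ_sto) x y) => [E|[H|H]]; first by left.
  - case: (classic (P x)); case: (classic (P y)); rewrite /ltRot; tauto.
  - case: (classic (P x)); case: (classic (P y)); rewrite /ltRot; tauto.
have asym : forall x y, ltQZ x y -> ltQZ y x -> False.
  move=> x y H1 H2; exact: (proj1 ltQZ_sto x (proj1 (proj2 ltQZ_sto) _ _ _ H1 H2)).
move=> a b c.
change (Cg ltQZ a b c <-> Cg ltQZ (g a) (g b) (g c)).
rewrite (rotC ltQZ ltQZ_sto P down).
exact: (isoC (ltRot ltQZ P) ltQZ g mono ginj tot asym (proj1 ltQZ_sto) a b c).
Qed.

Lemma CSpart (g : QZ -> QZ) : preserves3 Crel g -> preserves4 Srel g.
Proof.
move=> HC.
have E : forall x y z, Cg ltQZ x y z = Cg ltQZ (g x) (g y) (g z).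
  by move=> x y z; apply: propositional_extensionality; exact: HC.
have E2 : forall a b c d, Sg ltQZ a b c d =
   ((Cg ltQZ a b c /\ Cg ltQZ c d a) \/ (Cg ltQZ a d c /\ Cg ltQZ c b a)).
  by move=> a b c d; apply: propositional_extensionality; exact: CS ltQZ_sto a b c d.
move=> a b c d; change (Sg ltQZ a b c d <-> Sg ltQZ (g a) (g b) (g c) (g d)).
by rewrite (E2 a b c d) (E2 (g a) (g b) (g c) (g d)) (E a b c) (E c d a) (E a d c) (E c b a).
Qed.

Lemma C_false x y : ~ Cg ltQZ x y (succ x).
Proof.
move=> H; have [H1 [H2 H3]] := C_dist ltQZ ltQZ_sto _ _ _ H.
have H4 : Cg ltQZ x (succ x) y.
  by apply: (proj2 (Cxs ltQZ ltQZ_sto x (succ x) y (covers_succ x))); split => // E; apply: H1.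
exact: (C_asym ltQZ ltQZ_sto _ _ _ H H4).
Qed.

Lemma SCpart (g : QZ -> QZ) : bijective g -> positive_perm g -> preserves4 Srel g ->
  preserves3 Crel g.
Proof.
move=> gb Hp HS.
have ginj : injective g by case: gb => gi gK _; exact: can_inj gK.
have Hs := pos_succ g Hp.
move=> a b c; change (Cg ltQZ a b c <-> Cg ltQZ (g a) (g b) (g c)).
case: (classic (b = succ a)) => Hb.
  subst b; rewrite Hs.
  rewrite (Cxs ltQZ ltQZ_sto a (succ a) c (covers_succ a)).
  rewrite (Cxs ltQZ ltQZ_sto (g a) (succ (g a)) (g c) (covers_succ (g a))).
  rewrite -Hs; split => [[H1 H2]|[H1 H2]]; split.
  - by move/ginj.
  - by move/ginj.
  - by move=> E; apply: H1; rewrite E.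
  - by move=> E; apply: H2; rewrite E.
case: (classic (c = succ a)) => Hc.
  subst c; rewrite Hs; split => H; exfalso; exact: C_false H.
have Hb' : g b <> succ (g a) by rewrite -Hs => /ginj.
have Hc' : g c <> succ (g a) by rewrite -Hs => /ginj.
rewrite (SC ltQZ ltQZ_sto a (succ a) b c (covers_succ a) Hb Hc).
rewrite (SC ltQZ ltQZ_sto (g a) (succ (g a)) (g b) (g c) (covers_succ (g a)) Hb' Hc').
rewrite -Hs; exact: HS.
Qed.

Theorem mainTheorem12 (g : QZ -> QZ) (g_perm : bijective g) :
  (preserves3 Crel g <-> positive_perm g /\ preserves4 Srel g) /\
  (preserves3 Crel g <->
     positive_perm g /\
     exists h : rat -> rat, bijective h /\ initiates g h /\ rotation_type h).
Proof.
split; split.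
- move=> HC; split; [exact: (key1 g g_perm HC).1 | exact: CSpart].
- by move=> [Hp HS]; exact: SCpart.
- by move=> HC; exact: key1.
- by move=> [Hp He]; exact: key2.
Qed.
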